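(* In the setting described in the context: if $(\Gamma,u,y,z)$ satisfies (P1) $\alpha_{ij}\hat{x}_j+u_{ij}\ge0$ and $-\alpha_{ij}\hat{x}_j+u_{ij}\ge0$ for all $j\in J_i,i\in I$; (P2) $y_{ij}+z_i\ge u_{ij}$ for all $j\in J_i,i\in I$; (P3) $\sum_{j\in J}a_{ij}\hat{x}_j-\sum_{j\in J_i}y_{ij}-\Gamma_iz_i\ge b_i$ for all $i\in I$; (P4) $y_{ij}\ge0$, $z_i\ge0$ for all $j\in J_i,i\in I$; (P5) $0\le\Gamma_i\le|J_i|$ for all $i\in I$, then $\Gamma\in\Theta$. Conversely, if $\sum_{j\in J}a_{ij}\hat{x}_j\ge b_i$ for all $i\in I$ and $\Gamma\in\Theta$, then there exists $(u,y,z)$ such that $(\Gamma,u,y,z)$ satisfies (P1)–(P5).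
   Context: Let $I=\{1,\dots,m\}$, $J=\{1,\dots,n\}$. Given are $a_{ij}\in\mathbb{R}$ ($i\in I,j\in J$), $b\in\mathbb{R}^m$, index sets $J_i\subseteq J$, nonnegative numbers $\alpha_{ij}$ ($j\in J_i,i\in I$), and an observed point $\hat{x}\in\mathbb{R}^n$. For $i\in I$ and $x\in\mathbb{R}^n$ let $j^i_1(x),\dots,j^i_{|J_i|}(x)$ be an ordering of $J_i$ such that $\alpha_{ij^i_k(x)}|x_{j^i_k(x)}|$ is the $k$-th largest element of $\{\alpha_{ij}|x_j|\}_{j\in J_i}$. For $\Gamma_i\in[0,|J_i|]$ define the protection value \[ P_i(\Gamma_i,x)=\sum_{k=1}^{\lfloor\Gamma_i\rfloor}\alpha_{ij^i_k(x)}|x_{j^i_k(x)}|+(\Gamma_i-\lfloor\Gamma_i\rfloor)\alpha_{ij^i_{\lceil\Gamma_i\rceil}(x)}|x_{j^i_{\lceil\Gamma_i\rceil}(x)}| \] (the last term being $0$ when $\Gamma_i$ is an integer). Let $s_i=\sum_{j\in J}a_{ij}\hat{x}_j-b_i$ and $\hat{I}=\{i\in I:0\le s_i\le\sum_{j\in J_i}\alpha_{ij}|\hat{x}_j|\}$. For $i\in\hat{I}$ let $\underline{\Gamma}_i=\min\{\sum_{j\in J_i}w_j: \sum_{j\in J_i}\alpha_{ij}|\hat{x}_j|w_j=s_i,\ 0\le w_j\le1\}$; it satisfies $s_i=P_i(\underline{\Gamma}_i,\hat{x})$. Standing assumption: for each $i\in\hat{I}$, $\underline{\Gamma}_i$ is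 the unique $\Gamma_i\in[0,|J_i|]$ with $s_i=P_i(\Gamma_i,\hat{x})$. Define $\Theta=\{\Gamma\in\mathbb{R}^m:\Gamma_i\in[0,\underline{\Gamma}_i]\ \forall i\in\hat{I};\ \Gamma_i\in[0,|J_i|]\ \forall i\in I\setminus\hat{I}\}$. The variables $u_{ij},y_{ij}$ ($j\in J_i,i\in I$), $z_i$ ($i\in I$), $\Gamma\in\mathbb{R}^m$ are real. *)

(* Defs.v *)
From HB Require Import structures.
From mathcomp Require Import all_boot all_order all_algebra.
From mathcomp Require Import classical_sets reals.
Set Implicit Arguments. Unset Strict Implicit. Unset Printing Implicit Defensive.
Import Order.TTheory GRing.Theory Num.Theory.
Local Open Scope ring_scope.
Local Open Scope classical_set_scope.

Section RobustDefs.
Variables (R : realType) (m n : nat).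
Variables (a : 'I_m -> 'I_n -> R) (b : 'I_m -> R) (J : 'I_m -> {set 'I_n})
          (alpha : 'I_m -> 'I_n -> R) (xh : 'I_n -> R).

Definition sorted_vals (i : 'I_m) (x : 'I_n -> R) : seq R :=
  sort (fun p q : R => q <= p) [seq alpha i j * `|x j| | j <- enum (J i)].

(* protection value P_i(G, x); 0-based index: the k-th largest is nth 0 s k.
   The fractional term uses the ceil(G)-th largest, i.e. index floor(G)
   when G is not an integer (when G is an integer the term is 0). *)
Definition Pprot (i : 'I_m) (G : R) (x : 'I_n -> R) : R :=
  let s := sorted_vals i x in
  let f := Num.floor G in
  \sum_(k < `|f|%N) nth 0 s k + (G - f%:~R) * nth 0 s `|f|%N.

Definition slack (i : 'I_m) : R := \sum_(j < n) a i j * xh j - b i.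

Definition inIhat (i : 'I_m) : Prop :=
  0 <= slack i /\ slack i <= \sum_(j in J i) alpha i j * `|xh j|.

Definition Gamma_low (i : 'I_m) : R :=
  inf [set t : R | exists w : 'I_n -> R,
         (forall j, j \in J i -> 0 <= w j <= 1) /\
         \sum_(j in J i) alpha i j * `|xh j| * w j = slack i /\
         t = \sum_(j in J i) w j].

Definition inTheta (G : 'I_m -> R) : Prop :=
  forall i, (inIhat i -> 0 <= G i <= Gamma_low i) /\
            (~ inIhat i -> 0 <= G i <= #|J i|%:R).

Definition feasible (G : 'I_m -> R) (u y : 'I_m -> 'I_n -> R) (z : 'I_m -> R) : Prop :=
  (forall i j, j \in J i -> 0 <= alpha i j * xh j + u i j /\ 0 <= - alpha i j * xh j + u i j) /\
  (forall i j, j \in J i -> u i j <= y i j + z i) /\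
  (forall i, b i <= \sum_(j < n) a i j * xh j - \sum_(j in J i) y i j - G i * z i) /\
  (forall i, (forall j, j \in J i -> 0 <= y i j) /\ 0 <= z i) /\
  (forall i, 0 <= G i <= #|J i|%:R).

End RobustDefs.

(* Main.v *)
Require Import Defs.
From HB Require Import structures.
From mathcomp Require Import all_boot all_order all_algebra.
From mathcomp Require Import classical_sets reals.
From mathcomp Require Import boolp ring lra.
Import Order.TTheory GRing.Theory Num.Theory.
Local Open Scope ring_scope.


Lemma key (R : realType) (s : seq R) (G : R) :
  all (fun x => 0 <= x) s -> sorted (fun p q : R => q <= p) s -> 0 <= G ->
  \sum_(x <- s) Num.max 0 (x - nth 0 s `|Num.floor G|%N) + G * nth 0 s `|Num.floor G|%N
  = \sum_(k < `|Num.floor G|%N) nth 0 s k + (G - (`|Num.floor G|%N)%:R) * nth 0 s `|Num.floor G|%N.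
Proof.
move=> s0 ss G0.
set f := `|Num.floor G|%N; set z := nth 0 s f.
have nth0 : forall k, 0 <= nth 0 s k.
  move=> k; case: (ltnP k (size s)) => hk; last by rewrite nth_default.
  by move/allP: s0; apply; rewrite mem_nth.
have mono : forall i j, (i <= j)%N -> (j < size s)%N -> nth 0 s j <= nth 0 s i.
  move=> i j ij js.
  have tr : transitive (fun p q : R => q <= p) by move=> x y w /= h1 h2; apply: le_trans h2 h1.
  have rf : reflexive (fun p q : R => q <= p) by move=> x /=.
  apply: (sorted_leq_nth tr rf 0 ss) => //.
  by rewrite inE; apply: leq_ltn_trans js.
have hk : forall k, Num.max 0 (nth 0 s k - z) = if (k < f)%N then nth 0 s k - z else 0.
  move=> k; case: ifP => kf.
    apply: max_r; rewrite subr_ge0 /z.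
    case: (ltnP f (size s)) => fs; first by apply: mono => //; apply: ltnW.
    by rewrite (nth_default 0 fs).
  apply: max_l; rewrite subr_le0 /z.
  case: (ltnP k (size s)) => ks; first by apply: mono => //; rewrite leqNgt kf.
  by rewrite (nth_default 0 ks).
rewrite (big_nth 0) big_mkord.
have -> : \sum_(i < size s) Num.max 0 (nth 0 s i - z) = \sum_(i < size s + f) Num.max 0 (nth 0 s i - z).
  rewrite -!(big_mkord xpredT (fun i => Num.max 0 (nth 0 s i - z))).
  rewrite [RHS](big_cat_nat _ (n := size s)) ?leq_addr //=.
  rewrite [X in _ = _ + X]big1_seq ?addr0 // => i /andP [_]; rewrite mem_index_iota => /andP [hi _].
  apply: max_l; rewrite (nth_default 0 hi) sub0r oppr_le0 /z; exact: nth0.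
rewrite -(big_mkord xpredT (fun i => Num.max 0 (nth 0 s i - z))).
rewrite (big_cat_nat _ (n := f)) ?leq_addl //=.
rewrite [X in _ + X + _]big1_seq ?addr0; last first.
  by move=> i /andP [_]; rewrite mem_index_iota => /andP [hi _]; rewrite hk ltnNge hi.
rewrite (eq_big_nat _ _ (F2 := fun i => nth 0 s i - z)); last first.
  by move=> i /andP [_ hi]; rewrite hk hi.
rewrite sumrB sumr_const_nat subn0 big_mkord -mulr_natl. lra.
Qed.

Lemma floor_nat (R : realType) (k : nat) : Num.floor (k%:R : R) = k%:Z.
Proof. apply: floor_def. rewrite intrD pmulrn lexx /=. lra. Qed.

Lemma sum_sv (R : realType) (m n : nat) (J : 'I_m -> {set 'I_n})
  (alpha : 'I_m -> 'I_n -> R) (xh : 'I_n -> R) i (F : R -> R) :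
  \sum_(x <- sorted_vals J alpha i xh) F x = \sum_(j in J i) F (alpha i j * `|xh j|).
Proof.
rewrite /sorted_vals (perm_big [seq alpha i j * `|xh j| | j <- enum (J i)]).
  by rewrite big_map big_enum.
by rewrite perm_sort.
Qed.

Lemma size_sv (R : realType) (m n : nat) (J : 'I_m -> {set 'I_n})
  (alpha : 'I_m -> 'I_n -> R) (xh : 'I_n -> R) i :
  size (sorted_vals J alpha i xh) = #|J i|.
Proof. by rewrite /sorted_vals size_sort size_map -cardE. Qed.

Lemma sv_ok (R : realType) (m n : nat) (J : 'I_m -> {set 'I_n})
  (alpha : 'I_m -> 'I_n -> R) (xh : 'I_n -> R) i :
  (forall j, j \in J i -> 0 <= alpha i j) ->
  all (fun x => 0 <= x) (sorted_vals J alpha i xh) /\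
  sorted (fun p q : R => q <= p) (sorted_vals J alpha i xh).
Proof.
move=> a0; split.
  rewrite /sorted_vals all_sort; apply/allP => x /mapP [j]; rewrite mem_enum => hj ->.
  by rewrite mulr_ge0 ?a0.
by apply: sort_sorted => p q; exact: le_total.
Qed.

Theorem lemma2 (R : realType) (m n : nat)
  (a : 'I_m -> 'I_n -> R) (b : 'I_m -> R) (J : 'I_m -> {set 'I_n})
  (alpha : 'I_m -> 'I_n -> R) (xh : 'I_n -> R) :
  (forall i j, j \in J i -> 0 <= alpha i j) ->
  (* standing assumption: Gamma_low i is the unique G in [0,|J_i|] with s_i = P_i(G, xh) *)
  (forall i, inIhat a b J alpha xh i ->
     forall G : R, (0 <= G <= #|J i|%:R /\ slack a b xh i = Pprot J alpha i G xh)
                   <-> G = Gamma_low a b J alpha xh i) ->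
  (forall (G : 'I_m -> R) (u y : 'I_m -> 'I_n -> R) (z : 'I_m -> R),
     feasible a b J alpha xh G u y z -> inTheta a b J alpha xh G) /\
  ((forall i, b i <= \sum_(j < n) a i j * xh j) ->
   forall G : 'I_m -> R, inTheta a b J alpha xh G ->
   exists (u y : 'I_m -> 'I_n -> R) (z : 'I_m -> R), feasible a b J alpha xh G u y z).
Proof.
move=> a0 huniq.
set c := fun i j => alpha i j * `|xh j|.
have c0 : forall i j, j \in J i -> 0 <= c i j.
  by move=> i j hj; rewrite /c mulr_ge0 ?a0.
have Glow : forall i, inIhat a b J alpha xh i ->
   0 <= Gamma_low a b J alpha xh i <= #|J i|%:R /\
   slack a b xh i = Pprot J alpha i (Gamma_low a b J alpha xh i) xh.
  by move=> i hi; apply/(huniq i hi).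
split.
  move=> G u y z [P1 [P2 [P3 [P4 P5]]]] i; split; last by [].
  move=> hI; have /andP [G0 GJ] := P5 i; rewrite G0 /=.
  have cu : forall j, j \in J i -> c i j <= u i j.
    move=> j hj; have [h1 h2] := P1 i j hj; have aj := a0 i j hj; rewrite /c.
    case: (lerP 0 (xh j)) => hx.
      rewrite ger0_norm //; lra.
    rewrite ltr0_norm // mulrN; lra.
  have hs : \sum_(j in J i) y i j + G i * z i <= slack a b xh i.
    rewrite /slack; have := P3 i; lra.
  have [y0 z0] := P4 i.
  have [zz|zpos] := eqVneq (z i) 0.
    have e1 : \sum_(j in J i) c i j <= slack a b xh i.
      apply: le_trans hs; rewrite zz mulr0 addr0; apply: ler_sum => j hj.
      apply: le_trans (cu j hj) _; have := P2 i j hj; rewrite zz addr0 //.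
    have e2 : slack a b xh i = \sum_(j in J i) c i j.
      by case: hI => _ h; apply/eqP; rewrite eq_le h e1.
    have hP : Pprot J alpha i #|J i|%:R xh = \sum_(j in J i) c i j.
      rewrite /Pprot floor_nat absz_nat subrr mul0r addr0.
      rewrite -(size_sv _ _ _ J alpha xh i) -(big_mkord xpredT (fun k => nth 0 (sorted_vals J alpha i xh) k)).
      by rewrite -(big_nth 0 xpredT id) sum_sv.
    have := (huniq i hI #|J i|%:R).1; rewrite lexx ler0n e2 hP => /(_ (conj erefl erefl)) <-.
    done.
  have zp : 0 < z i by rewrite lt_def zpos z0.
  apply: lb_le_inf.
    case: (eqVneq (\sum_(j in J i) c i j) 0) => hc.
      exists 0, (fun _ => 0); split; first by move=> j _; rewrite lexx ler01.
      split; last by rewrite big1.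
      rewrite big1; last by move=> j _; rewrite mulr0.
      case: hI => h1 h2; apply/eqP; rewrite eq_le h1 /=.
      by move: h2; rewrite /c hc.
    have cp : 0 < \sum_(j in J i) c i j.
      by rewrite lt_def hc sumr_ge0 // => j; apply: c0.
    case: hI => h1 h2.
    exists (\sum_(j in J i) slack a b xh i / \sum_(j in J i) c i j).
    exists (fun _ => slack a b xh i / \sum_(j in J i) c i j); split; last split => //.
      move=> j _; rewrite divr_ge0 ?h1 ?(ltW cp) //= ler_pdivrMr // mul1r //.
    rewrite -mulr_suml; rewrite /c in cp *; field; exact: lt0r_neq0.
  move=> t [w [hw [hsum ->]]].
  have e : G i * z i <= (\sum_(j in J i) w j) * z i.
    suff : \sum_(j in J i) y i j + G i * z i <= \sum_(j in J i) y i j + (\sum_(j in J i) w j) * z i by lra.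
    apply: (le_trans hs); rewrite -hsum mulr_suml -big_split /=; apply: ler_sum => j hj.
    have /andP [w0 w1] := hw j hj; have := P2 i j hj; have := cu j hj; have := y0 j hj.
    rewrite -/(c i j) => hy hcu hp.
    have : c i j * w j <= (y i j + z i) * w j by apply: ler_wpM2r => //; lra.
    have : y i j * w j <= y i j by rewrite -[leRHS]mulr1; apply: ler_wpM2l.
    nra.
  by rewrite -(ler_pM2r zp).
move=> hb G hT.
pose zz i := if pselect (inIhat a b J alpha xh i)
             then nth 0 (sorted_vals J alpha i xh) `|Num.floor (Gamma_low a b J alpha xh i)|%N
             else 0.
have zz0 : forall i, 0 <= zz i.
  move=> i; rewrite /zz; destruct (pselect (inIhat a b J alpha xh i)) => //.
  have [s0 _] := sv_ok _ _ _ J alpha xh i (a0 i).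
  set k := `|_|%N.
  case: (ltnP k (size (sorted_vals J alpha i xh))) => hk; last by rewrite nth_default.
  by move/allP: s0; apply; rewrite mem_nth.
exists c, (fun i j => Num.max 0 (c i j - zz i)), zz.
split.
  move=> i j hj; have aj := a0 i j hj; rewrite /c.
  have h1 : alpha i j * xh j <= alpha i j * `|xh j| by apply: ler_wpM2l => //; apply: ler_norm.
  have h2 : alpha i j * - xh j <= alpha i j * `|xh j|.
    by apply: ler_wpM2l => //; rewrite -normrN ler_norm.
  rewrite mulrN in h2; split; lra.
split.
  move=> i j hj /=; have : c i j - zz i <= Num.max 0 (c i j - zz i) by rewrite le_max lexx orbT.
  lra.
split.
  move=> i; suff : \sum_(j in J i) Num.max 0 (c i j - zz i) + G i * zz i <= slack a b xh i.
    by rewrite /slack; lra.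
  case: (pselect (inIhat a b J alpha xh i)) => hI.
    have [/andP [gl0 glJ] hsl] := Glow i hI.
    have [gl1 _] := hT i; have /andP [_ Ggl] := gl1 hI.
    have [s0 ss] := sv_ok _ _ _ J alpha xh i (a0 i).
    have := key _ _ _ s0 ss gl0.
    rewrite -(sum_sv _ _ _ J alpha xh i (fun x => Num.max 0 (x - zz i))).
    have ez : zz i = nth 0 (sorted_vals J alpha i xh) `|Num.floor (Gamma_low a b J alpha xh i)|%N.
      by rewrite /zz; destruct (pselect (inIhat a b J alpha xh i)).
    rewrite -ez => hk.
    have hP : Pprot J alpha i (Gamma_low a b J alpha xh i) xh = \sum_(k < `|Num.floor (Gamma_low a b J alpha xh i)|%N) nth 0 (sorted_vals J alpha i xh) k + (Gamma_low a b J alpha xh i - (`|Num.floor (Gamma_low a b J alpha xh i)|%N)%:R) * zz i.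
      by rewrite /Pprot ez natr_absz ger0_norm // floor_ge0.
    have : G i * zz i <= Gamma_low a b J alpha xh i * zz i by apply: ler_wpM2r.
    rewrite hsl hP -hk; lra.
  have ez : zz i = 0 by rewrite /zz; destruct (pselect (inIhat a b J alpha xh i)).
  rewrite ez mulr0 addr0.
  rewrite (eq_bigr (fun j => c i j)); last first.
    by move=> j hj; rewrite subr0; apply: max_r; apply: c0.
  have sl0 : 0 <= slack a b xh i by rewrite /slack subr_ge0.
  rewrite leNgt; apply/negP => hlt; apply: hI; split => //; exact: ltW.
split.
  move=> i; split; last exact: zz0.
  by move=> j _; rewrite le_max lexx.
move=> i; have [h1 h2] := hT i.
case: (pselect (inIhat a b J alpha xh i)) => hI.
  have /andP [g0 ggl] := h1 hI; have [/andP [_ glJ] _] := Glow i hI.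
  by rewrite g0 (le_trans ggl glJ).
exact: h2.
Qed.
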